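(* Let $q \geq 5$ be a prime power and let $\mathcal{X}$ be a plane curve of degree $q-1$ defined over $\mathbb{F}_q$ without $\mathbb{F}_q$-linear components with $\mathrm{N}_q(\mathcal{X}) = (q-1)^2$. If $P \in \mathcal{X}(\mathbb{F}_q)$, then $\psi_{q-1}(P) \geq 3$. In particular $a_{q-1} \geq 3(q-1)$. Moreover, if $\psi_{q-1}(P) = 3$, then among the $q+1$ lines of $\mathbb{P}^2(\mathbb{F}_q)$ through $P$, exactly $3$ contain $q-1$ points of $\mathcal{X}(\mathbb{F}_q)$ and the remaining $q-2$ contain exactly $q-2$ points of $\mathcal{X}(\mathbb{F}_q)$.
   Context: $\mathcal{X}(\mathbb{F}_q)=\mathcal{X}\cap\mathbb{P}^2(\mathbb{F}_q)$, $\mathrm{N}_q(\mathcal{X})=\#\mathcal{X}(\mathbb{F}_q)$; ''without $\mathbb{F}_q$-linear components'' means no line defined over $\mathbb{F}_q$ is a component. For $0\le i\le q+1$, $\mathcal{A}_i$ is the set of lines $l$ defined over $\mathbb{F}_q$ with $\#(l\cap\mathcal{X}(\mathbb{F}_q)) = i$, and $a_i = \#\mathcal{A}_i$. For a point $P \in \mathbb{P}^2(\mathbb{F}_q)$, $\psi_i(P)$ is the number of lines in $\mathcal{A}_i$ passing through $P$. *)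

(* Defs.v *)
From HB Require Import structures.
From mathcomp Require Import all_boot all_order all_algebra all_field.
From mathcomp Require Import mpoly.
Set Implicit Arguments. Unset Strict Implicit. Unset Printing Implicit Defensive.
Import Order.TTheory GRing.Theory.
Local Open Scope ring_scope.

Section PlaneCurves.
Variable K : finFieldType.

Definition vec3 := {ffun 'I_3 -> K}.

(* Canonical representative of a projective point (or line): nonzero vector
   whose first nonzero coordinate equals 1.  The points of P^2(F_q) are in
   bijection with the normalized vectors; so are the F_q-rational lines
   (via their coefficient vectors). *)
Definition normalized (v : vec3) : bool :=
  [exists i : 'I_3, (v i == 1) && [forall j : 'I_3, (j < i)%N ==> (v j == 0)]].

Definition incident (l P : vec3) : bool := \sum_(i < 3) l i * P i == 0.

Definition linear_form (a : vec3) : {mpoly K[3]} := \sum_(i < 3) a i *: 'X_i.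

Definition has_Fq_linear_component (F : {mpoly K[3]}) : Prop :=
  exists (a : vec3) (G : {mpoly K[3]}), a != 0 /\ F = linear_form a * G.

Definition ratpts (F : {mpoly K[3]}) : {set vec3} :=
  [set P : vec3 | normalized P & F.@[P] == 0].

Definition Nq (F : {mpoly K[3]}) : nat := #|ratpts F|.

Definition pts_on_line (F : {mpoly K[3]}) (l : vec3) : nat :=
  #|[set P in ratpts F | incident l P]|.

Definition a_ (F : {mpoly K[3]}) (i : nat) : nat :=
  #|[set l : vec3 | normalized l & pts_on_line F l == i]|.

Definition psi (F : {mpoly K[3]}) (i : nat) (P : vec3) : nat :=
  #|[set l : vec3 | [&& normalized l, incident l P & pts_on_line F l == i]]|.

End PlaneCurves.

(* Main.v *)
Require Import Defs.
From HB Require Import structures.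
From mathcomp Require Import all_boot all_order all_algebra all_field.
From mathcomp Require Import mpoly.
From mathcomp Require Import ring zify fingroup cyclic.
Import GRing.Theory.
Set Implicit Arguments. Unset Strict Implicit. Unset Printing Implicit Defensive.
Local Open Scope ring_scope.

Section Sums.
Variable K : finFieldType.
Local Notation q := #|K|.

Lemma q_gt1 : (1 < q)%N. Proof. exact: finNzRing_gt1. Qed.

Lemma cardK0 : (q%:R : K) = 0.
Proof. by rewrite -FinRing.zmodXgE -cardsT (@expg_cardG _ [set: K]%G) ?inE. Qed.

Lemma qm1K : ((q.-1)%:R : K) = -1.
Proof.
apply/eqP; rewrite -subr_eq0 opprK -(natrD _ _ 1) addn1 prednK ?cardK0 //.
by have := q_gt1; lia.
Qed.

Lemma unit_pow (a : K) : a != 0 -> a ^+ q.-1 = 1.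
Proof.
move=> nz; have := expf_card a.
rewrite -(prednK (ltnW q_gt1)) exprSr -{3}(mul1r a) => h.
exact: (mulIf nz h).
Qed.

Definition S (j : nat) : K := \sum_(a : K) a ^+ j.

Lemma S_pred : S q.-1 = -1.
Proof.
rewrite /S (eq_bigr (fun a => if a != 0 then 1 else 0)); last first.
  move=> a _; have [->|nz] := eqVneq a 0; last by rewrite unit_pow.
  rewrite expr0n /= (_ : (q.-1 == 0)%N = false) //.
  by have := q_gt1; lia.
rewrite -big_mkcond /= sumr_const cardC1 qm1K //.
Qed.

Lemma S_small j : (j < q.-1)%N -> S j = 0.
Proof.
move=> hj; case: j hj => [|j] hj.
  rewrite /S (eq_bigr (fun _ => 1)) => [|a _]; last by rewrite expr0.
  by rewrite sumr_const; exact: cardK0.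
have [a nz ne1] : exists2 a : K, a != 0 & a ^+ j.+1 != 1.
  case: (boolP [exists a : K, (a != 0) && (a ^+ j.+1 != 1)]).
    by move=> /existsP [a /andP[nz ne1]]; exists a.
  rewrite negb_exists => /forallP H; exfalso.
  pose p : {poly K} := 'X^(j.+1) - 1%:P.
  have pnz : p != 0 by rewrite -size_poly_eq0 size_XnsubC.
  have hall : all (root p) (enum (predC1 (0 : K))).
    apply/allP => x; rewrite mem_enum => xnz; have {}xnz : x != 0 := xnz.
    have := H x; rewrite xnz /= negbK => /eqP hx.
    by rewrite rootE !hornerE hx subrr.
  have := max_poly_roots pnz hall (enum_uniq _).
  by rewrite size_XnsubC // -cardE cardC1 ltnS leqNgt hj.
have : S j.+1 = a ^+ j.+1 * S j.+1.
  rewrite /S mulr_sumr (reindex_inj (mulfI nz)) /=.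
  by apply: eq_bigr => x _; rewrite exprMn.
move/eqP; rewrite -subr_eq0 -{1}(mul1r (S _)) -mulrBl mulf_eq0 subr_eq0 eq_sym.
by rewrite (negbTE ne1) /= => /eqP.
Qed.

Lemma sum_meval n (p : {mpoly K[n]}) (e : 'I_n -> nat) :
  \sum_(x : {ffun 'I_n -> K}) p.@[x] * \prod_i x i ^+ e i
  = \sum_(m <- msupp p) p@_m * \prod_i S (m i + e i).
Proof.
under eq_bigr do rewrite mevalE mulr_suml.
rewrite exchange_big /=; apply: eq_bigr => m _.
under eq_bigr do rewrite -mulrA.
rewrite -mulr_sumr; congr (_ * _).
rewrite /S bigA_distr_bigA /=; apply: eq_bigr => x _.
by rewrite -big_split /=; apply: eq_bigr => i _; rewrite exprD.
Qed.

Lemma mnm_le_mdeg n (m : 'X_{1.. n}) i : (m i <= mdeg m)%N.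
Proof. by rewrite mdegE (bigD1 i) //= leq_addr. Qed.


Lemma sum_small n (p : {mpoly K[n]}) :
  (msize p <= n * q.-1)%N -> \sum_(x : {ffun 'I_n -> K}) p.@[x] = 0.
Proof.
move=> hs.
rewrite (eq_bigr (fun x : {ffun 'I_n -> K} => p.@[x] * \prod_(i < n) x i ^+ (fun _ => 0%N) i)); last first.
  by move=> x _; rewrite big1 ?mulr1 // => i _; rewrite expr0.
rewrite sum_meval big1_seq // => m /andP[_ hm].
have hdeg := msize_mdeg_lt hm.
case: (boolP [exists i, (m i < q.-1)%N]) => [/existsP [i hi]|].
  by rewrite (bigD1 i) //= addn0 S_small ?mul0r ?mulr0.
rewrite negb_exists => /forallP H; exfalso.
have : (n * q.-1 <= mdeg m)%N.
  rewrite mdegE -[X in (X * _)%N]card_ord -sum_nat_const.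
  by apply: leq_sum => i _; have := H i; rewrite -leqNgt.
by move: hdeg hs; lia.
Qed.

Lemma vanish n (p : {mpoly K[n]}) :
  (msize p <= q)%N -> (forall x : {ffun 'I_n -> K}, p.@[x] = 0) -> p = 0.
Proof.
move=> hs hz; apply/eqP/negPn/negP => pnz.
set ms := mlead p.
have msupp_ms : ms \in msupp p by apply: mlead_supp.
have hdeg : (mdeg ms).+1 = msize p by apply: mlead_deg.
pose e := fun i : 'I_n => (q.-1 - ms i)%N.
have := @sum_meval n p e.
rewrite big1 => [|x _]; last by rewrite hz mul0r.
rewrite (bigD1_seq ms) ?msupp_uniq //=.
have -> : \sum_(m <- msupp p | m != ms) p@_m * \prod_i S (m i + e i) = 0.
  rewrite big_seq_cond big1 // => m /andP[hm nms].
  have hm' := msize_mdeg_lt hm.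
  case: (boolP [exists i, (m i < ms i)%N]) => [/existsP [i hi]|].
    rewrite (bigD1 i) //= S_small ?mul0r ?mulr0 //.
    by rewrite /e; have := mnm_le_mdeg ms i; move: hdeg hs hi; lia.
  rewrite negb_exists => /forallP H; exfalso.
  have [i hi] : exists i, (ms i < m i)%N.
    case: (boolP [exists i, (ms i < m i)%N]) => [/existsP [i hi]|]; first by exists i.
    rewrite negb_exists => /forallP H2.
    move/negP: nms; case; apply/eqP/mnmP => i.
    by have := H i; have := H2 i; rewrite -!leqNgt; lia.
  have : (mdeg ms < mdeg m)%N.
    rewrite !mdegE (bigD1 i) //= [X in (_ < X)%N](bigD1 i) //=.
    have : (\sum_(j < n | j != i) ms j <= \sum_(j < n | j != i) m j)%N.
      by apply: leq_sum => j _; have := H j; rewrite -leqNgt.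
    by move=> h; rewrite -addSn; exact: leq_add hi h.
  by move: hdeg hm'; lia.
rewrite addr0 (eq_bigr (fun _ => -1)) => [|i _]; last first.
  rewrite /e subnKC ?S_pred //.
  by have := mnm_le_mdeg ms i; move: hdeg hs; lia.
rewrite prodr_const => /esym/eqP; rewrite mulf_eq0 signr_eq0 orbF.
by rewrite mleadc_eq0 (negbTE pnz).
Qed.

End Sums.

Section Proj.
Variable K : finFieldType.
Local Notation q := #|K|.
Local Notation V3 := {ffun 'I_3 -> K}.

Definition i0 : 'I_3 := @Ordinal 3 0 isT.
Definition i1 : 'I_3 := @Ordinal 3 1 isT.
Definition i2 : 'I_3 := @Ordinal 3 2 isT.

Lemma ordE (j : 'I_3) : j = i0 \/ j = i1 \/ j = i2.
Proof.
case: j => [[|[|[|m]]] hm]; [left|right;left|right;right|by []]; exact: val_inj.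
Qed.

Lemma sum3 (f : 'I_3 -> K) : \sum_(i < 3) f i = f i0 + f i1 + f i2.
Proof.
rewrite !big_ord_recr big_ord0 /= add0r; congr (f _ + f _ + f _); exact: val_inj.
Qed.

Lemma vec3P (u v : V3) : u i0 = v i0 -> u i1 = v i1 -> u i2 = v i2 -> u = v.
Proof. by move=> h0 h1 h2; apply/ffunP => j; case: (ordE j) => [->|[->|->]]. Qed.

Definition scl (c : K) (v : V3) : V3 := [ffun i => c * v i].
Definition dot (a x : V3) : K := \sum_(i < 3) a i * x i.
Definition pv (v : V3) : K :=
  if v i0 != 0 then v i0 else if v i1 != 0 then v i1 else v i2.
Definition nrm (v : V3) : V3 := scl (pv v)^-1 v.

Lemma dotE a x : dot a x = a i0 * x i0 + a i1 * x i1 + a i2 * x i2.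
Proof. by rewrite /dot sum3. Qed.

Lemma incidentE (l P : V3) : incident l P = (dot l P == 0).
Proof. by []. Qed.

Lemma dotC a x : dot a x = dot x a.
Proof. by rewrite !dotE; ring. Qed.

Lemma dotZr a c x : dot a (scl c x) = c * dot a x.
Proof. by rewrite !dotE !ffunE; ring. Qed.

Lemma sclA c d v : scl c (scl d v) = scl (c * d) v.
Proof. by apply/ffunP => i; rewrite !ffunE mulrA. Qed.

Lemma scl1 v : scl 1 v = v.
Proof. by apply/ffunP => i; rewrite !ffunE mul1r. Qed.

Lemma scl0 v : scl 0 v = 0.
Proof. by apply/ffunP => i; rewrite !ffunE mul0r. Qed.

Lemma normalizedE (v : V3) : normalized v = (pv v == 1).
Proof.
rewrite /normalized /pv; apply/existsP/eqP.
  case=> i /andP[/eqP vi /forallP H].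
  have H' : forall j : 'I_3, (j < i)%N -> v j = 0.
    by move=> j hj; apply/eqP; exact: (implyP (H j) hj).
  case: (ordE i) vi H' => [->|[->|->]] vi H'.
  - by rewrite vi oner_neq0.
  - by rewrite (H' i0 isT) eqxx /= vi oner_neq0.
  - by rewrite (H' i0 isT) (H' i1 isT) eqxx /= vi.
move=> h.
have lt1 (j : 'I_3) : (j < 1)%N -> j = i0.
  by case: (ordE j) => [->|[->|->]].
have lt2 (j : 'I_3) : (j < 2)%N -> j = i0 \/ j = i1.
  by case: (ordE j) => [->|[->|->]]; auto.
case: (eqVneq (v i0) 0) => h0.
  rewrite h0 eqxx /= in h.
  case: (eqVneq (v i1) 0) => h1.
    rewrite h1 eqxx /= in h.
    exists i2; rewrite h eqxx /=; apply/forallP => j; apply/implyP => /lt2.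
    by case=> ->; apply/eqP.
  rewrite h1 /= in h.
  exists i1; rewrite h eqxx /=; apply/forallP => j; apply/implyP => /lt1 ->.
  by apply/eqP.
rewrite h0 /= in h.
exists i0; rewrite h eqxx /=; apply/forallP => j; apply/implyP.
by move=> H; have := H isT.
Qed.

Lemma pvZ c v : pv (scl c v) = c * pv v.
Proof.
rewrite /pv !ffunE; have [->|cnz] := eqVneq c 0.
  by rewrite !mul0r eqxx.
by rewrite !mulf_eq0 (negbTE cnz) /=; case: ifP => //; case: ifP.
Qed.

Lemma pv_eq0 v : (pv v == 0) = (v == 0).
Proof.
apply/idP/eqP => [|->]; last by rewrite /pv !ffunE eqxx.
rewrite /pv; case: (eqVneq (v i0) 0) => h0 /=; last by rewrite (negbTE h0).
case: (eqVneq (v i1) 0) => h1 /=; last by rewrite (negbTE h1).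
by move=> /eqP h2; apply: vec3P; rewrite ffunE.
Qed.

Lemma normalized_nz (v : V3) : normalized v -> v != 0.
Proof. by rewrite normalizedE -pv_eq0 => /eqP ->; rewrite oner_neq0. Qed.

Lemma nrm_normalized v : v != 0 -> normalized (nrm v).
Proof. by rewrite -pv_eq0 normalizedE /nrm pvZ => h; rewrite mulVf. Qed.

Lemma scl_nrm v : v != 0 -> scl (pv v) (nrm v) = v.
Proof. by rewrite -pv_eq0 => h; rewrite /nrm sclA mulfV // scl1. Qed.

Lemma norm_uniq (P Q : V3) c : normalized P -> normalized Q -> Q = scl c P -> Q = P.
Proof.
rewrite !normalizedE => /eqP hP /eqP hQ hQP.
have : pv Q = c * pv P by rewrite hQP pvZ.
by rewrite hP hQ mulr1 => hc; rewrite hQP -hc scl1.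
Qed.

Lemma scl_inj c c' (P : V3) : P != 0 -> scl c P = scl c' P -> c = c'.
Proof.
rewrite -pv_eq0 => hP h; have := congr1 pv h; rewrite !pvZ.
exact: (mulIf hP).
Qed.

Lemma scl_eq0 c v : (scl c v == 0) = (c == 0) || (v == 0).
Proof.
rewrite -!pv_eq0 pvZ mulf_eq0 //.
Qed.

End Proj.

Section Part.
Variable K : finFieldType.
Local Notation q := #|K|.
Local Notation V3 := {ffun 'I_3 -> K}.

Lemma sum_part (V : nmodType) (S : pred V3) (g : V3 -> V) :
  (forall c x, c != 0 -> S x -> S (scl c x)) ->
  (forall c x, c != 0 -> g (scl c x) = g x) ->
  \sum_(x : V3 | (x != 0) && S x) g x = (\sum_(P : V3 | normalized P && S P) g P) *+ q.-1.
Proof.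
move=> hS hg.
rewrite (partition_big (@nrm K) (fun P => normalized P && S P)) => [|x /andP[xnz Sx]]; last first.
  by rewrite nrm_normalized // hS // invr_eq0 pv_eq0.
rewrite -sumrMnl; apply: eq_bigr => P /andP[nP SP].
have -> : \sum_(x : V3 | (x != 0) && S x && (nrm x == P)) g x =
          \sum_(x in [set scl c P | c in predC1 (0 : K)]) g x.
  apply: eq_bigl => x; apply/idP/imsetP.
    case/andP=> /andP[xnz Sx] /eqP hx; exists (pv x); last by rewrite -hx scl_nrm.
    by rewrite inE /= pv_eq0.
  case=> c; rewrite inE => cnz ->.
  rewrite scl_eq0 (negbTE cnz) (negbTE (normalized_nz nP)) /= hS //=.
  move: nP; rewrite normalizedE => /eqP hP.
  by rewrite /nrm pvZ hP mulr1 sclA mulVf // scl1.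
rewrite big_imset /=; last by move=> c c' _ _; apply: scl_inj (normalized_nz nP).
rewrite (eq_bigr (fun _ => g P)) => [|c]; last by rewrite inE => cnz; apply: hg.
by rewrite sumr_const cardC1.
Qed.

Lemma inj_bound (a : V3) (i j k : 'I_3) :
  a i != 0 ->
  (forall x, dot a x = a i * x i + a j * x j + a k * x k) ->
  (forall t : 'I_3, t = i \/ t = j \/ t = k) ->
  (#|[set x : V3 | dot a x == 0%R]| <= q * q)%N.
Proof.
move=> ai hd hcov.
pose f := fun x : V3 => (x j, x k).
have finj : {in [set x : V3 | dot a x == 0%R] &, injective f}.
  move=> x y; rewrite !inE => /eqP hx /eqP hy [hj hk].
  have hi : x i = y i.
    apply: (mulfI ai); apply/eqP; rewrite -subr_eq0.
    have : dot a x - dot a y = 0 by rewrite hx hy subrr.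
    by rewrite !hd hj hk => <-; apply/eqP; ring.
  apply/ffunP => t; case: (hcov t) => [->|[->|->]] //.
rewrite -(card_in_imset finj).
by apply: leq_trans (max_card _) _; rewrite card_prod.
Qed.

Lemma card_plane (a : V3) : a != 0 ->
  (#|[set x : V3 | dot a x == 0%R]| <= q * q)%N.
Proof.
move=> anz.
case: (eqVneq (a i0) 0) => h0; last first.
  apply: (inj_bound (j := i1) (k := i2) h0); first by move=> x; rewrite dotE.
  by move=> t; case: (ordE t); auto.
case: (eqVneq (a i1) 0) => h1; last first.
  apply: (inj_bound (j := i0) (k := i2) h1); first by move=> x; rewrite dotE; ring.
  by move=> t; case: (ordE t) => [|[|]]; auto.
case: (eqVneq (a i2) 0) => h2; last first.
  apply: (inj_bound (j := i0) (k := i1) h2); first by move=> x; rewrite dotE; ring.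
  by move=> t; case: (ordE t) => [|[|]]; auto.
by move/negP: anz; case; apply/eqP; apply: vec3P; rewrite ffunE.
Qed.

Lemma card_line (a : V3) : a != 0 ->
  (#|[set P : V3 | normalized P && (dot a P == 0%R)]| <= q.+1)%N.
Proof.
move=> anz.
have := sum_part (V := nat) (S := fun x => dot a x == 0) (g := fun _ => 1%N).
rewrite !sum1_card.
have hS : forall (c : K) (x : V3), c != 0 -> dot a x == 0 -> dot a (scl c x) == 0.
  by move=> c x _ /eqP h; rewrite dotZr h mulr0.
move=> /(_ hS (fun _ _ _ => erefl)).
have e : forall m k : nat, (m *+ k)%R = (m * k)%N.
  by move=> m k; elim: k => [|k IH] //=; rewrite ?muln0 // mulrS IH mulnS.
rewrite e => h.
have hW := card_plane anz.
have h0 : (0 : V3) \in [set x : V3 | dot a x == 0%R].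
  by rewrite inE dotE !ffunE !mulr0 !addr0.
have := cardsD1 (0 : V3) [set x : V3 | dot a x == 0%R].
rewrite h0 (_ : #|[set x : V3 | dot a x == 0%R] :\ (0 : V3)| = #|(fun x : V3 => (x != 0) && (dot a x == 0))|); last first.
  by apply: eq_card => x; rewrite !inE.
rewrite h => hM.
rewrite cardsE; have := q_gt1 K; move: hM hW.
set N := #|_|; set M := #|_|; simpl; move=> hM hW hq.
move: hM hW hq; case: #|K| => [|r] //= hM hW hq.
nia.
Qed.

End Part.

Section Cross.
Variable K : finFieldType.
Local Notation q := #|K|.
Local Notation V3 := {ffun 'I_3 -> K}.

Definition cross (u v : V3) : V3 := [ffun i =>
  if i == i0 then u i1 * v i2 - u i2 * v i1
  else if i == i1 then u i2 * v i0 - u i0 * v i2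
  else u i0 * v i1 - u i1 * v i0].

Lemma cross0 u v : cross u v i0 = u i1 * v i2 - u i2 * v i1.
Proof. by rewrite ffunE. Qed.
Lemma cross1 u v : cross u v i1 = u i2 * v i0 - u i0 * v i2.
Proof. by rewrite ffunE. Qed.
Lemma cross2 u v : cross u v i2 = u i0 * v i1 - u i1 * v i0.
Proof. by rewrite ffunE. Qed.

Lemma dot_cross_l u v : dot u (cross u v) = 0.
Proof. by rewrite dotE cross0 cross1 cross2; ring. Qed.
Lemma dot_cross_r u v : dot v (cross u v) = 0.
Proof. by rewrite dotE cross0 cross1 cross2; ring. Qed.

Lemma eq_from (a b e : K) : e = 0 -> (a - b = e \/ a - b = - e) -> a = b.
Proof. by move=> -> [] /eqP; rewrite ?oppr0 subr_eq0 => /eqP. Qed.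

Lemma cross_eq0 (u v : V3) : normalized u -> cross u v = 0 -> exists c, v = scl c u.
Proof.
rewrite normalizedE /pv => hu hc.
have h0 : cross u v i0 = 0 by rewrite hc ffunE.
have h1 : cross u v i1 = 0 by rewrite hc ffunE.
have h2 : cross u v i2 = 0 by rewrite hc ffunE.
rewrite cross0 in h0; rewrite cross1 in h1; rewrite cross2 in h2.
case: (eqVneq (u i0) 0) hu => hu0 hu.
  rewrite /= in hu.
  case: (eqVneq (u i1) 0) hu => hu1 hu.
    rewrite /= in hu; move/eqP: hu => hu.
    exists (v i2); apply: vec3P.
    - by rewrite ffunE; apply: (eq_from h1); rewrite hu hu0; (left; ring) || (right; ring).
    - by rewrite ffunE; apply: (eq_from h0); rewrite hu hu1; (left; ring) || (right; ring).
    - by rewrite ffunE hu mulr1.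
  rewrite /= in hu; move/eqP: hu => hu.
  exists (v i1); apply: vec3P.
  - by rewrite ffunE; apply: (eq_from h2); rewrite hu hu0; (left; ring) || (right; ring).
  - by rewrite ffunE hu mulr1.
  - by rewrite ffunE; apply: (eq_from h0); rewrite hu; (left; ring) || (right; ring).
rewrite /= in hu; move/eqP: hu => hu.
exists (v i0); apply: vec3P.
- by rewrite ffunE hu mulr1.
- by rewrite ffunE; apply: (eq_from h2); rewrite hu; (left; ring) || (right; ring).
- by rewrite ffunE; apply: (eq_from h1); rewrite hu; (left; ring) || (right; ring).
Qed.

Lemma cross_nz (P Q : V3) : normalized P -> normalized Q -> P != Q -> cross P Q != 0.
Proof.
move=> nP nQ PQ; apply/negP => /eqP h.
have [c hc] := cross_eq0 nP h.
by move: PQ; rewrite (norm_uniq nP nQ hc) eqxx.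
Qed.

Lemma line_through (P Q : V3) : normalized P -> normalized Q -> P != Q ->
  exists l : V3, [&& normalized l, incident l P & incident l Q].
Proof.
move=> nP nQ PQ; have cnz := cross_nz nP nQ PQ.
exists (nrm (cross P Q)); rewrite nrm_normalized //= !incidentE.
by rewrite /nrm !(dotC (scl _ _)) !dotZr dot_cross_l dot_cross_r mulr0 eqxx.
Qed.

Lemma cross_cross_i (l P Q : V3) t :
  cross l (cross P Q) t = P t * dot l Q - Q t * dot l P.
Proof.
case: (ordE t) => [->|[->|->]];
  rewrite ?cross0 ?cross1 ?cross2 !dotE ?cross0 ?cross1 ?cross2; ring.
Qed.

Lemma line_unique (l l' P Q : V3) : normalized l -> normalized l' ->
  normalized P -> normalized Q -> P != Q ->
  incident l P -> incident l Q -> incident l' P -> incident l' Q -> l = l'.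
Proof.
move=> nl nl' nP nQ PQ; rewrite !incidentE => /eqP lP /eqP lQ /eqP l'P /eqP l'Q.
have cnz := cross_nz nP nQ PQ.
have [c hc] : exists c, cross P Q = scl c l.
  apply: cross_eq0 nl _; apply/ffunP => t.
  by rewrite cross_cross_i lP lQ !mulr0 subrr ffunE.
have [c' hc'] : exists c, cross P Q = scl c l'.
  apply: cross_eq0 nl' _; apply/ffunP => t.
  by rewrite cross_cross_i l'P l'Q !mulr0 subrr ffunE.
have c0 : c != 0 by apply: contraNneq cnz => c0; rewrite hc c0 scl0.
apply: (norm_uniq (c := c^-1 * c') nl' nl).
by rewrite -sclA -hc' hc sclA mulVf // scl1.
Qed.

End Cross.

Section Alg.
Variable K : finFieldType.
Local Notation q := #|K|.
Local Notation V3 := {ffun 'I_3 -> K}.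
Implicit Types (F G : {mpoly K[3]}).

Lemma homog_eval F d (c : K) (x : V3) : F \is d.-homog ->
  F.@[scl c x] = c ^+ d * F.@[x].
Proof.
move=> /dhomogP hF; rewrite !mevalE mulr_sumr; apply: eq_big_seq => m hm.
under eq_bigr do rewrite ffunE exprMn.
rewrite big_split /= prodrXr -mdegE hF //; ring.
Qed.

Lemma homog_eval0 F d : F \is d.-homog -> (0 < d)%N -> F.@[0 : V3] = 0.
Proof.
move=> hF hd; rewrite -(scl0 (0 : V3)) (homog_eval _ _ hF) expr0n.
by rewrite (negbTE (lt0n_neq0 hd)) mul0r.
Qed.

Lemma msize_homog F d : F \is d.-homog -> (msize F <= d.+1)%N.
Proof.
move=> /dhomogP hF; have [->|Fnz] := eqVneq F 0; first by rewrite msize0.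
by rewrite -mlead_deg // hF // mlead_supp.
Qed.

Lemma linear_formE (l x : V3) : (linear_form l).@[x] = dot l x.
Proof.
rewrite /linear_form (big_morph _ (mevalD x) (meval0 x)) /dot.
by apply: eq_bigr => i _; rewrite mevalZ mevalXU.
Qed.

Lemma msize_lin (l : V3) : (msize (linear_form l) <= 2)%N.
Proof.
rewrite /linear_form; apply: (big_ind (fun p : {mpoly K[3]} => msize p <= 2)%N).
- by rewrite msize0.
- by move=> p p' h h'; apply: leq_trans (msizeD_le _ _) _; rewrite geq_max h h'.
- by move=> i _; apply: leq_trans (msizeZ_le _ _) _; rewrite msizeX mdeg1.
Qed.

Lemma msizeM_le' F G : (msize (F * G) <= (msize F + msize G).-1)%N.
Proof.
have [->|Fnz] := eqVneq F 0; first by rewrite mul0r msize0.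
have [->|Gnz] := eqVneq G 0; first by rewrite mulr0 msize0.
by rewrite msizeM.
Qed.

Lemma msize_pow F k : (msize F <= 2)%N -> (msize (F ^+ k) <= k.+1)%N.
Proof.
move=> hF; elim: k => [|k IH]; first by rewrite expr0 msize1.
rewrite exprS; apply: leq_trans (msizeM_le' _ _) _.
by move: hF IH; lia.
Qed.

Lemma msize_prod_pow (r : 3.-tuple {mpoly K[3]}) (m : 'X_{1.. 3}) :
  (forall i, msize (tnth r i) <= 2)%N ->
  (msize (\prod_(i < 3) (tnth r i) ^+ m i) <= (mdeg m).+1)%N.
Proof.
move=> hr; rewrite mdegE.
elim/big_rec2: _ => [|i d p _ hp]; first by rewrite msize1.
apply: leq_trans (msizeM_le' _ _) _.
by have := msize_pow (m i) (hr i); move: hp; lia.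
Qed.

Definition Erel (L a b : {mpoly K[3]}) := exists G, a - b = L * G.

Lemma Erel_add L a b a' b' : Erel L a b -> Erel L a' b' -> Erel L (a + a') (b + b').
Proof.
case=> G h [G' h']; exists (G + G').
have -> : a + a' - (b + b') = (a - b) + (a' - b') by ring.
by rewrite h h'; ring.
Qed.

Lemma Erel_mul L a b a' b' : Erel L a b -> Erel L a' b' -> Erel L (a * a') (b * b').
Proof.
case=> G h [G' h']; exists (G * a' + b * G').
have -> : a * a' - b * b' = (a - b) * a' + b * (a' - b') by ring.
by rewrite h h'; ring.
Qed.

Lemma Erel_pow L a b k : Erel L a b -> Erel L (a ^+ k) (b ^+ k).
Proof.
move=> h; elim: k => [|k IH]; first by exists 0; rewrite !expr0 subrr mulr0.
by rewrite !exprS; apply: Erel_mul.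
Qed.

Lemma Erel_scale L a b c : Erel L a b -> Erel L (c *: a) (c *: b).
Proof. by case=> G h; exists (c *: G); rewrite -scalerBr h scalerAr. Qed.

Lemma div_lin (l cv : V3) F :
  dot l cv = 1 -> (forall x : V3, dot l x = 0 -> F.@[x] = 0) ->
  (msize F <= q)%N -> exists G, F = linear_form l * G.
Proof.
move=> hlc hz hs.
set L := linear_form l.
pose rho : 3.-tuple {mpoly K[3]} := [tuple 'X_i - cv i *: L | i < 3].
have hE : Erel L F (F \mPo rho).
  rewrite {1}[F]mpolyE comp_mpolyEX.
  apply: (big_ind2 (Erel L)).
  - by exists 0; rewrite subrr mulr0.
  - by move=> ? ? ? ?; apply: Erel_add.
  move=> m _; apply: Erel_scale; rewrite comp_mpolyX mpolyXE_id.
  apply: (big_ind2 (Erel L)).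
  - by exists 0; rewrite subrr mulr0.
  - by move=> ? ? ? ?; apply: Erel_mul.
  move=> i _; apply: Erel_pow; rewrite tnth_mktuple.
  by exists (cv i)%:MP; rewrite mulrC mul_mpolyC opprB addrC subrK.
have hR : F \mPo rho = 0.
  apply: (vanish (K := K)); last first.
    move=> x; rewrite comp_mpoly_meval.
    pose y : V3 := [ffun i => x i - cv i * dot l x].
    rewrite (@meval_eq _ _ _ y); last first.
      by move=> i; rewrite tnth_mktuple ffunE mevalB mevalXU mevalZ linear_formE.
    apply: hz.
    have -> : dot l y = dot l x - dot l cv * dot l x by rewrite /y !dotE !ffunE; ring.
    by rewrite hlc mul1r subrr.
  rewrite comp_mpolyEX big_seq.
  apply: (big_ind (fun p : {mpoly K[3]} => msize p <= q)%N).
  - by rewrite msize0.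
  - by move=> p p' h h'; apply: leq_trans (msizeD_le _ _) _; rewrite geq_max h h'.
  move=> m hm; apply: leq_trans (msizeZ_le _ _) _; rewrite comp_mpolyX.
  apply: leq_trans (msize_prod_pow _ _) _.
    move=> i; rewrite tnth_mktuple; apply: leq_trans (msizeD_le _ _) _.
    rewrite geq_max msizeX mdeg1 /= msizeN; apply: leq_trans (msizeZ_le _ _) _.
    exact: msize_lin.
  by have := msize_mdeg_lt hm; move: hs; lia.
by case: hE => G; rewrite hR subr0 => ->; exists G.
Qed.

End Alg.

Section Key.
Variable K : finFieldType.
Local Notation q := #|K|.
Local Notation V3 := {ffun 'I_3 -> K}.

Lemma q_pred_gt0 : (0 < q.-1)%N.
Proof. by have := q_gt1 K; lia. Qed.

Lemma sum_line_zero (F : {mpoly K[3]}) (l : V3) : F \is q.-1.-homog ->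
  \sum_(P : V3 | normalized P && (dot l P == 0)) F.@[P] = 0.
Proof.
move=> hF.
set L := linear_form l.
pose G := F * (1 - L ^+ q.-1).
have hq := q_gt1 K.
have hG : (msize G <= 3 * q.-1)%N.
  apply: leq_trans (msizeM_le' _ _) _.
  have h1 := msize_homog hF.
  have h2 : (msize (1 - L ^+ q.-1) <= q.-1.+1)%N.
    apply: leq_trans (msizeD_le _ _) _; rewrite msizeN msize1 geq_max /=.
    exact: msize_pow (msize_lin l).
  by move: h1 h2 hq; lia.
have := sum_small hG.
rewrite (eq_bigr (fun x : V3 => if dot l x == 0 then F.@[x] else 0)); last first.
  move=> x _; rewrite mevalM mevalB meval1 rmorphXn /= linear_formE.
  have [->|nz] := eqVneq (dot l x) 0.
    by rewrite expr0n (negbTE (lt0n_neq0 q_pred_gt0)) subr0 mulr1.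
  by rewrite unit_pow // subrr mulr0.
rewrite -big_mkcond /= (bigD1 (0 : V3)) /=; last by rewrite dotE !ffunE !mulr0 !addr0.
rewrite (homog_eval0 hF q_pred_gt0) add0r.
rewrite (eq_bigl (fun x : V3 => (x != 0) && (dot l x == 0))); last by move=> x; rewrite andbC.
rewrite (sum_part (S := fun x => dot l x == 0) (g := fun x : V3 => F.@[x])).
- by rewrite -mulr_natr qm1K mulrN1 => /eqP; rewrite oppr_eq0 => /eqP.
- by move=> c x _ /eqP h; rewrite dotZr h mulr0.
- by move=> c x cnz; rewrite (homog_eval _ _ hF) unit_pow // mul1r.
Qed.

Lemma pts_le (F : {mpoly K[3]}) (l : V3) : F \is q.-1.-homog ->
  ~ has_Fq_linear_component F -> normalized l -> (pts_on_line F l <= q.-1)%N.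
Proof.
move=> hF hnl nl; rewrite leqNgt; apply/negP => hlt.
set Wp := [set P : V3 | normalized P && (dot l P == 0%R)].
set Z := [set P : V3 | F.@[P] == 0].
have hWp : (#|Wp| <= q.+1)%N by apply: card_line; exact: normalized_nz.
have hI : Wp :&: Z = [set P in ratpts F | incident l P].
  apply/setP => P; rewrite !inE incidentE.
  by case: (normalized P); case: (dot l P == 0); case: (F.@[P] == 0).
have hsplit := cardsID Z Wp.
have hI' : #|Wp :&: Z| = pts_on_line F l by rewrite hI.
have hD : (#|Wp :\: Z| <= 1)%N.
  by move: hsplit hWp hlt (q_gt1 K); rewrite hI' -subn1; lia.
have hsum := sum_line_zero l hF.
rewrite (eq_bigl (fun P => P \in Wp)) in hsum; last by move=> P; rewrite inE.
rewrite (big_setID Z) /= big1 ?add0r in hsum; last by move=> P; rewrite !inE => /andP[_ /eqP].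
have hWZ : Wp :\: Z = set0.
  apply/eqP; rewrite -cards_eq0; move: hD; rewrite leq_eqVlt ltnS leqn0 => /orP[|//].
  case/cards1P => w hw; rewrite hw big_set1 in hsum.
  have : w \in Wp :\: Z by rewrite hw set11.
  by rewrite !inE hsum eqxx.
have hz : forall x : V3, dot l x = 0 -> F.@[x] = 0.
  move=> x hx; have [->|xnz] := eqVneq x 0; first exact: (homog_eval0 hF q_pred_gt0).
  rewrite -(scl_nrm xnz) (homog_eval _ _ hF).
  suff -> : F.@[nrm x] = 0 by rewrite mulr0.
  have : nrm x \in Wp by rewrite inE nrm_normalized //= /nrm dotZr hx mulr0.
  move=> hW; apply/eqP; apply: contraT => hnz.
  have : nrm x \in Wp :\: Z by rewrite inE inE hnz hW.
  by rewrite hWZ inE.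
have lnz := normalized_nz nl.
have [i li] : exists i, l i != 0.
  case: (boolP [exists i, l i != 0]) => [/existsP [i hi]|]; first by exists i.
  rewrite negb_exists => /forallP h; move/negP: lnz; case; apply/eqP.
  by apply/ffunP => j; have := h j; rewrite negbK ffunE => /eqP.
pose cv : V3 := [ffun j => if j == i then (l i)^-1 else 0].
have hcv : dot l cv = 1.
  rewrite /dot (bigD1 i) //= big1 => [|j hj]; last by rewrite ffunE (negbTE hj) mulr0.
  by rewrite ffunE eqxx mulfV // addr0.
have hsF : (msize F <= q)%N by move: (msize_homog hF); rewrite prednK // ltnW // q_gt1.
have [G hG] := div_lin hcv hz hsF.
by apply: hnl; exists l, G.
Qed.

End Key.

Lemma sum_ind (T : finType) (A : {set T}) (b : pred T) :
  (\sum_(x in A) (b x : nat))%N = #|[set x in A | b x]|.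
Proof.
rewrite -sum1_card big_mkcond [RHS]big_mkcond /=; apply: eq_bigr => x _.
by rewrite !inE; case: (x \in A); case: (b x).
Qed.

Section Comb.
Variable K : finFieldType.
Local Notation q := #|K|.
Local Notation V3 := (vec3 K).

Definition LP (P : V3) := [set l : V3 | normalized l && incident l P].

Lemma psiE (F : {mpoly K[3]}) i (P : V3) :
  psi F i P = (\sum_(l in LP P) (pts_on_line F l == i : nat))%N.
Proof. by rewrite sum_ind; apply: eq_card => l; rewrite !inE andbA. Qed.

Lemma LP_card (P : V3) : normalized P -> (#|LP P| <= q.+1)%N.
Proof.
move=> nP; apply: leq_trans (card_line (normalized_nz nP)).
by rewrite subset_leq_card //; apply/subsetP => l; rewrite !inE incidentE dotC.
Qed.

Lemma one_line (P Q : V3) : normalized P -> normalized Q -> P != Q ->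
  (\sum_(l in LP P) (incident l Q : nat))%N = 1%N.
Proof.
move=> nP nQ PQ; rewrite sum_ind; apply/eqP/cards1P.
have [l0 /and3P[nl0 l0P l0Q]] := line_through nP nQ PQ.
exists l0; apply/setP => l; rewrite !inE; apply/idP/eqP.
  by case/andP=> /andP[nl lP] lQ; apply: (line_unique nl nl0 nP nQ PQ).
by move=> ->; rewrite nl0 l0P l0Q.
Qed.

Lemma point_sum (F : {mpoly K[3]}) (P : V3) : P \in ratpts F ->
  (\sum_(l in LP P) (pts_on_line F l).-1)%N = (#|ratpts F|).-1.
Proof.
move=> hP.
have nP : normalized P by move: hP; rewrite inE => /andP[].
have -> : (#|ratpts F|).-1 = #|ratpts F :\ P| by rewrite (cardsD1 P) hP.
rewrite -sum1_card.
transitivity (\sum_(Q in ratpts F :\ P) \sum_(l in LP P) (incident l Q : nat))%N; last first.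
  apply: eq_bigr => Q /setD1P [QP]; rewrite inE => /andP[nQ _].
  by rewrite one_line // eq_sym.
rewrite exchange_big /=; apply: eq_bigr => l hl.
rewrite sum_ind.
have -> : [set x in ratpts F :\ P | incident l x] = [set x in ratpts F | incident l x] :\ P.
  by apply/setP => x; rewrite !inE; case: (x != P); case: (normalized x); case: (F.@[x] == 0).
have hPl : P \in [set x in ratpts F | incident l x].
  by rewrite inE hP; move: hl; rewrite inE => /andP[_ ->].
by rewrite /pts_on_line [in LHS](cardsD1 P) hPl.
Qed.

End Comb.

Unset Implicit Arguments.

Theorem lemma3p7 (K : finFieldType) (F : {mpoly K[3]}) :
  (5 <= #|K|)%N ->
  F != 0 ->
  F \is (#|K| - 1)%N.-homog ->
  ~ has_Fq_linear_component F ->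
  Nq F = ((#|K| - 1) ^ 2)%N ->
  (forall P, P \in ratpts F -> (3 <= psi F (#|K| - 1) P)%N) /\
  (3 * (#|K| - 1) <= a_ F (#|K| - 1))%N /\
  (forall P, P \in ratpts F -> psi F (#|K| - 1) P = 3%N ->
     psi F (#|K| - 2) P = (#|K| - 2)%N /\
     (forall l : vec3 K, normalized l -> incident l P ->
        pts_on_line F l = (#|K| - 1)%N \/ pts_on_line F l = (#|K| - 2)%N)).
Proof.
move=> hq Fnz hF hnl hN.
have hF' : F \is (#|K|.-1).-homog by rewrite -subn1.
have hpts : forall l : vec3 K, normalized l -> (pts_on_line F l <= #|K| - 1)%N.
  by move=> l nl; rewrite subn1; exact: pts_le hF' hnl nl.
pose f := fun l : vec3 K => (pts_on_line F l).-1.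
pose g := fun l : vec3 K => ((#|K| - 3) + (pts_on_line F l == #|K| - 1))%N.
have hfg : forall P l, l \in LP P -> (f l <= g l)%N.
  move=> P l; rewrite inE => /andP[nl _]; have := hpts l nl; rewrite /f /g.
  by case: eqP => [->|ne] h; rewrite /nat_of_bool -?subn1; lia.
have hsumf : forall P, P \in ratpts F ->
    (\sum_(l in LP P) f l = (#|K| - 1) ^ 2 - 1)%N.
  by move=> P hP; rewrite point_sum // -hN /Nq subn1.
have hsumg : forall P, (\sum_(l in LP P) g l = #|LP P| * (#|K| - 3) + psi F (#|K| - 1) P)%N.
  by move=> P; rewrite big_split /= sum_nat_const psiE.
have hLPc : forall P, P \in ratpts F -> (#|LP P| <= #|K|.+1)%N.
  by move=> P; rewrite inE => /andP[nP _]; exact: LP_card.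
have part1 : forall P, P \in ratpts F -> (3 <= psi F (#|K| - 1) P)%N.
  move=> P hP.
  have h1 : (\sum_(l in LP P) f l <= \sum_(l in LP P) g l)%N by apply: leq_sum => l; exact: hfg.
  rewrite hsumf // hsumg in h1.
  have h2 : (#|LP P| * (#|K| - 3) <= #|K|.+1 * (#|K| - 3))%N by apply: leq_mul => //; exact: hLPc.
  move: h1 h2 hq; nia.
split; first exact: part1.
split.
  set A := [set l : vec3 K | normalized l & pts_on_line F l == (#|K| - 1)%N].
  have hpsiA : forall P, psi F (#|K| - 1) P = (\sum_(l in A) (incident l P : nat))%N.
    move=> P; rewrite sum_ind; apply: eq_card => l; rewrite !inE.
    by case: (normalized l); case: (incident l P); case: (_ == _).
  have h1 : (\sum_(P in ratpts F) 3 <= \sum_(P in ratpts F) psi F (#|K| - 1) P)%N.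
    by apply: leq_sum => P hP; exact: part1.
  rewrite sum_nat_const (eq_bigr _ (fun P _ => hpsiA P)) exchange_big /= in h1.
  rewrite (eq_bigr (fun _ => (#|K| - 1)%N)) in h1; last first.
    move=> l; rewrite inE => /andP[_ /eqP <-].
    by rewrite sum_ind.
  rewrite sum_nat_const in h1.
  move: h1; rewrite -/(Nq F) hN /a_ -/A => h1.
  have hq1 : (0 < #|K| - 1)%N by lia.
  rewrite -(leq_pmul2r hq1); move: h1; set x := #|A|; nia.
move=> P hP hpsi.
have h1 : (\sum_(l in LP P) f l <= \sum_(l in LP P) g l)%N by apply: leq_sum => l; exact: hfg.
have h2 : (#|LP P| * (#|K| - 3) <= #|K|.+1 * (#|K| - 3))%N by apply: leq_mul => //; exact: hLPc.
have hS : (\sum_(l in LP P) g l = \sum_(l in LP P) f l + \sum_(l in LP P) (g l - f l))%N.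
  by rewrite -big_split; apply: eq_bigr => l hl /=; rewrite subnKC // (hfg P).
rewrite hsumf // hsumg hpsi in h1 hS.
have h0 : (\sum_(l in LP P) (g l - f l) == 0)%N by move: h1 h2 hS hq; nia.
have hLPeq : #|LP P| = #|K|.+1.
  by apply/eqP; rewrite -(eqn_pmul2r (_ : 0 < #|K| - 3)%N); [apply/eqP; move: h1 h2 hS h0 hq; nia | lia].
move: h0; rewrite sum_nat_eq0 => /forall_inP hfg0.
have hdisj : forall l, l \in LP P ->
    pts_on_line F l = (#|K| - 1)%N \/ pts_on_line F l = (#|K| - 2)%N.
  move=> l hl; have := hfg0 l hl; have := hfg P l hl; rewrite /f /g.
  case: eqP => [->|ne] h3 h4; first by left.
  by right; move: h3 h4; rewrite /nat_of_bool -?subn1; lia.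
split; last first.
  by move=> l nl lP; apply: hdisj; rewrite inE nl lP.
have : (#|LP P| = psi F (#|K| - 1) P + psi F (#|K| - 2) P)%N.
  rewrite !psiE -big_split /= -sum1_card; apply: eq_bigr => l hl.
  have ne12 : (#|K| - 1 == #|K| - 2)%N = false by apply/eqP; lia.
  by case: (hdisj l hl) => ->; rewrite eqxx ?ne12 // eq_sym ne12.
by rewrite hLPeq hpsi; lia.
Qed.
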